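(* Assume (A1)–(A3) hold and let $\{x_k\}$ be the sequence generated by LMTR. Then $\{D_k\}$ is convergent and $\lim_{k\to\infty}D_k=\lim_{k\to\infty}\psi(x_k)$. Further, the algorithm either stops after finitely many iterations at an $x_k$ with $\|h(x_k)\|\le\varepsilon$ or $\|\nabla\psi(x_k)\|\le\varepsilon$, or generates an infinite sequence $\{x_k\}$ with $\lim_{k\to\infty}\|\nabla\psi(x_k)\|=0$, so that every accumulation point of $\{x_k\}$ is a stationary point of $\psi$.
   Context: Let $h:\mathbb{R}^m\to\mathbb{R}^n$ be continuously differentiable; $\nabla h(x)\in\mathbb{R}^{m\times n}$ denotes the transposed Jacobian, $\|\cdot\|$ the Euclidean norm (operator norm for matrices), $\psi(x):=\frac12\|h(x)\|^2$, $\nabla\psi(x)=\nabla h(x)h(x)$; $\Omega:=\{x:h(x)=0\}\ne\emptyset$; $\mathcal{L}(x_0):=\{x:\psi(x)\le\psi(x_0)\}$; $q_k(d):=\frac12\|\nabla h(x_k)^Td+h(x_k)\|^2$. Assumptions: (A1) for some $x^*\in\Omega$ there are $\delta\in\,]0,1]$, $\beta>0$, $\mathtt r\in\,]0,1[$ with $\beta\,\mathrm{dist}(x,\Omega)\le\|h(x)\|^\delta$ whenever $\|x-x^*\|\le\mathtt r$. (A2) $\mathcal{L}(x_0)$ is bounded. (A3) $\|\nabla h(x)-\nabla h(y)\|\le L\|x-y\|$ for all $x,y$. Algorithm LMTR: parameters $x_0$, $\varepsilon>0$, $\eta\in\,]0,4\delta[$, $0<\rho_2<1<\rho_1$, $0<\upsilon_1<\upsilon_2<1$,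 $\mu_{\min}>0$, $0\le\xi_{\min}\le\xi_{\max}$, $0\le\omega_{\min}\le\omega_{\max}$ with $\xi_{\min}+\omega_{\min}>0$, $0\le\theta_{\min}\le\theta_{\max}<1$, sequences $\xi_k\in[\xi_{\min},\xi_{\max}]$, $\omega_k\in[\omega_{\min},\omega_{\max}]$, $\theta_k\in[\theta_{\min},\theta_{\max}]$; $\lambda_0:=1$, $D_0:=\psi(x_0)$. At iteration $k$: stop if $\|h(x_k)\|\le\varepsilon$ or $\|\nabla\psi(x_k)\|\le\varepsilon$. Otherwise $\mu_k:=\xi_k\|h(x_k)\|^\eta+\omega_k\|\nabla h(x_k)h(x_k)\|^\eta$. For a value $\lambda>0$ set $\widehat\mu:=\max\{\mu_{\min},\lambda\mu_k\}$, let $d$ solve $(\nabla h(x_k)\nabla h(x_k)^T+\widehat\mu I)d=-\nabla h(x_k)h(x_k)$ and $\widehat r:=(D_k-\psi(x_k+d))/(q_k(0)-q_k(d))$. Starting from $\lambda=\lambda_k$, replace $\lambda$ by $\rho_1\lambda$ as long as $\widehat r<\upsilon_1$; $p_k$ is the number of replacements and $\widehat\mu_k,d_k,\widehat r_k$ the accepted values. Then $x_{k+1}:=x_k+d_k$, $\lambda_{k+1}:=\rho_2\rho_1^{p_k}\lambda_k$ if $\widehat r_k\ge\upsilon_2$, else $\lambda_{k+1}:=\rho_1^{p_k}\lambda_k$, and $D_{k+1}:=(1-\theta_k)\psi(x_{k+1})+\theta_kD_k$. *)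

(* Defs.v *)
From HB Require Import structures.
From mathcomp Require Import all_boot all_order all_algebra.
From mathcomp Require Import all_classical all_reals all_analysis.
Set Implicit Arguments. Unset Strict Implicit. Unset Printing Implicit Defensive.
Import Order.TTheory GRing.Theory Num.Theory.
Import numFieldNormedType.Exports.
Local Open Scope classical_set_scope.
Local Open Scope ring_scope.

Section LMTR.
Variable R : realType.

Definition enorm k (v : 'rV[R]_k) : R := Num.sqrt (\sum_(i < k) (v ord0 i) ^+ 2).

Definition opnorm p q (A : 'M[R]_(p, q)) : R :=
  sup [set enorm (u *m A) | u in [set u : 'rV[R]_p | enorm u <= 1]].

Definition dist_set k (x : 'rV[R]_k) (S : set 'rV[R]_k) : R :=
  inf [set enorm (x - y) | y in S].

Variables m n : nat.
Implicit Types (h : 'rV[R]_m -> 'rV[R]_n) (x d : 'rV[R]_m).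

(* 'J h x : 'M_(m,n) is the transposed Jacobian \nabla h(x): d *m 'J h x = h'(x) d *)
Definition psi h x : R := 2^-1 * enorm (h x) ^+ 2.
(* \nabla psi(x) = \nabla h(x) h(x), as a row vector *)
Definition gradpsi h x : 'rV[R]_m := h x *m ('J h x)^T.
Definition qmod h x d : R := 2^-1 * enorm (d *m 'J h x + h x) ^+ 2.

(* unique solution d of (\nabla h \nabla h^T + mu I) d = - \nabla h h (row form) *)
Definition lm_dir h x (mu : R) : 'rV[R]_m :=
  - gradpsi h x *m invmx ('J h x *m ('J h x)^T + mu%:M).

Definition mu_val h (xi om eta : R) x : R :=
  xi * enorm (h x) `^ eta + om * enorm (gradpsi h x) `^ eta.

Definition muhat (mumin lam mu : R) : R := Num.max mumin (lam * mu).

Definition ratio h x (Dk : R) d : R :=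
  (Dk - psi h (x + d)) / (qmod h x 0 - qmod h x d).

Definition stops h (eps : R) x : Prop :=
  enorm (h x) <= eps \/ enorm (gradpsi h x) <= eps.

Definition acc_point (xs : nat -> 'rV[R]_m) (xb : 'rV[R]_m) : Prop :=
  forall e : R, 0 < e -> forall N : nat, exists k : nat, (N <= k)%N /\ enorm (xs k - xb) < e.

(* the sequences (x_k, lambda_k, D_k, p_k) produced by LMTR: they are constrained
   for every k such that the algorithm has not stopped at x_0, ..., x_k *)
Definition LMTR_run h (x0 : 'rV[R]_m) (eps eta rho1 rho2 ups1 ups2 mumin : R)
    (xi om theta : nat -> R)
    (x : nat -> 'rV[R]_m) (lam D : nat -> R) (p : nat -> nat) : Prop :=
  [/\ x 0%N = x0, lam 0%N = 1, D 0%N = psi h x0 &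
  forall k : nat, (forall j : nat, (j <= k)%N -> ~ stops h eps (x j)) ->
    let mu := mu_val h (xi k) (om k) eta (x k) in
    let dir t := lm_dir h (x k) (muhat mumin t mu) in
    let trial t := ratio h (x k) (D k) (dir t) in
    [/\ (forall j : nat, (j < p k)%N -> trial (rho1 ^+ j * lam k) < ups1),
        ups1 <= trial (rho1 ^+ p k * lam k),
        x k.+1 = x k + dir (rho1 ^+ p k * lam k),
        lam k.+1 = (if ups2 <= trial (rho1 ^+ p k * lam k)
                    then rho2 * rho1 ^+ p k * lam k else rho1 ^+ p k * lam k) &
        D k.+1 = (1 - theta k) * psi h (x k.+1) + theta k * D k]].

End LMTR.

(* Main.v *)
Require Import Defs.
From HB Require Import structures.
From mathcomp Require Import all_boot all_order all_algebra.
From mathcomp Require Import all_classical all_reals all_analysis.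
From mathcomp Require Import ring lra.
Import Order.TTheory GRing.Theory Num.Theory.
Import numFieldNormedType.Exports.
Local Open Scope classical_set_scope.
Local Open Scope ring_scope.
Set Implicit Arguments. Unset Strict Implicit. Unset Printing Implicit Defensive.


Section Vec.
Variable R : realType.

Definition dot k (u v : 'rV[R]_k) : R := \sum_(i < k) u ord0 i * v ord0 i.

Lemma dotE k (u v : 'rV[R]_k) : dot u v = (u *m v^T) ord0 ord0.
Proof. by rewrite /dot !mxE; apply: eq_bigr => i _; rewrite !mxE. Qed.

Lemma dotC k (u v : 'rV[R]_k) : dot u v = dot v u.
Proof. by rewrite /dot; apply: eq_bigr => i _; rewrite mulrC. Qed.

Lemma dotDl k (u v w : 'rV[R]_k) : dot (u + v) w = dot u w + dot v w.
Proof. by rewrite /dot -big_split; apply: eq_bigr => i _; rewrite !mxE mulrDl. Qed.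

Lemma dotDr k (u v w : 'rV[R]_k) : dot w (u + v) = dot w u + dot w v.
Proof. by rewrite dotC dotDl !(dotC w). Qed.

Lemma dotZl k a (u v : 'rV[R]_k) : dot (a *: u) v = a * dot u v.
Proof. by rewrite /dot mulr_sumr; apply: eq_bigr => i _; rewrite !mxE mulrA. Qed.

Lemma dotZr k a (u v : 'rV[R]_k) : dot v (a *: u) = a * dot v u.
Proof. by rewrite dotC dotZl dotC. Qed.

Lemma dotNl k (u v : 'rV[R]_k) : dot (- u) v = - dot u v.
Proof. by rewrite -scaleN1r dotZl mulN1r. Qed.

Lemma dotNr k (u v : 'rV[R]_k) : dot v (- u) = - dot v u.
Proof. by rewrite dotC dotNl dotC. Qed.

Lemma dot0l k (u : 'rV[R]_k) : dot 0 u = 0.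
Proof. by rewrite /dot big1 // => i _; rewrite mxE mul0r. Qed.

Lemma dot0r k (u : 'rV[R]_k) : dot u 0 = 0.
Proof. by rewrite dotC dot0l. Qed.

Lemma dot_ge0 k (u : 'rV[R]_k) : 0 <= dot u u.
Proof. by rewrite /dot sumr_ge0 // => i _; rewrite -expr2 sqr_ge0. Qed.

Lemma dot_eq0 k (u : 'rV[R]_k) : dot u u = 0 -> u = 0.
Proof.
move=> /eqP; rewrite /dot psumr_eq0 => [/allP H|i _]; last by rewrite -expr2 sqr_ge0.
apply/rowP => i; rewrite mxE; have /H : i \in index_enum 'I_k by rewrite mem_index_enum.
by rewrite /= mulf_eq0 orbb => /eqP.
Qed.

Lemma dot_mx k l (u : 'rV[R]_k) (B : 'M[R]_(k, l)) (v : 'rV[R]_l) :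
  dot (u *m B) v = dot u (v *m B^T).
Proof. by rewrite !dotE trmx_mul trmxK mulmxA. Qed.

Lemma enormE k (u : 'rV[R]_k) : enorm u = Num.sqrt (dot u u).
Proof. by rewrite /enorm /dot; congr Num.sqrt; apply: eq_bigr => i _; rewrite expr2. Qed.

Lemma enorm_ge0 k (u : 'rV[R]_k) : 0 <= enorm u.
Proof. by rewrite enormE sqrtr_ge0. Qed.

Lemma enorm_sq k (u : 'rV[R]_k) : enorm u ^+ 2 = dot u u.
Proof. by rewrite enormE sqr_sqrtr // dot_ge0. Qed.

Lemma sq_le (x y : R) : 0 <= y -> x ^+ 2 <= y ^+ 2 -> x <= y.
Proof. move=> y0 H; nra. Qed.

Lemma CS k (u v : 'rV[R]_k) : dot u v <= enorm u * enorm v.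
Proof.
apply: sq_le; first by rewrite mulr_ge0 // enorm_ge0.
rewrite exprMn !enorm_sq.
set a := dot u u; set b := dot u v; set c := dot v v.
have c0 : 0 <= c by apply: dot_ge0.
have a0 : 0 <= a by apply: dot_ge0.
case: (ltgtP c 0) => [|cpos|c0'].
- by rewrite ltNge c0.
- have H := dot_ge0 (c *: u - b *: v).
  rewrite dotDl !dotDr !dotNl !dotNr !dotZl !dotZr -/a -/c (dotC v u) -/b in H.
  nra.
- rewrite /b /a /c in c0' *; have v0 := dot_eq0 c0'.
  by rewrite v0 dot0r dot0l expr0n /= mulr0.
Qed.

Lemma enormN k (u : 'rV[R]_k) : enorm (- u) = enorm u.
Proof. by rewrite !enormE dotNl dotNr opprK. Qed.

Lemma CSabs k (u v : 'rV[R]_k) : `|dot u v| <= enorm u * enorm v.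
Proof.
case: (lerP 0 (dot u v)) => H; first by rewrite ger0_norm // CS.
by rewrite ltr0_norm // -dotNr; apply: le_trans (CS _ _) _; rewrite enormN.
Qed.

Lemma enormZ k a (u : 'rV[R]_k) : enorm (a *: u) = `|a| * enorm u.
Proof.
by rewrite !enormE dotZl dotZr mulrA -expr2 sqrtrM ?sqr_ge0 // sqrtr_sqr.
Qed.



Lemma enorm0 k : enorm (0 : 'rV[R]_k) = 0.
Proof. by rewrite enormE dot0l sqrtr0. Qed.

Lemma enorm_eq0 k (u : 'rV[R]_k) : enorm u = 0 -> u = 0.
Proof.
move=> H; apply: dot_eq0; by rewrite -enorm_sq H expr0n.
Qed.

Lemma enormD k (u v : 'rV[R]_k) : enorm (u + v) <= enorm u + enorm v.
Proof.
apply: sq_le; first by rewrite addr_ge0 // enorm_ge0.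
rewrite enorm_sq dotDl !dotDr (dotC v u) sqrrD !enorm_sq.
have := CS u v; lra.
Qed.

Lemma dot_sq_le k (u v : 'rV[R]_k) : dot (u + v) (u + v) <= 2 * dot u u + 2 * dot v v.
Proof.
have H := dot_ge0 (u - v).
rewrite dotDl !dotDr !dotNl !dotNr (dotC v u) in H.
rewrite dotDl !dotDr (dotC v u); lra.
Qed.

End Vec.


Section Op.
Variable R : realType.

Lemma CS2 k (u v : 'rV[R]_k) : dot u v ^+ 2 <= dot u u * dot v v.
Proof.
have H := CSabs u v; rewrite -real_normK ?num_real // -!enorm_sq -exprMn.
by rewrite ler_pXn2r // ?nnegrE ?mulr_ge0 ?enorm_ge0 // normr_ge0.
Qed.

Lemma frob_bound p q (B : 'M[R]_(p, q)) (u : 'rV[R]_p) :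
  dot (u *m B) (u *m B) <= (\sum_(j < q) dot (\row_i B i j) (\row_i B i j)) * dot u u.
Proof.
rewrite {1}/dot mulr_suml; apply: ler_sum => j _.
have -> : (u *m B) ord0 j = dot u (\row_i B i j).
  by rewrite mxE /dot; apply: eq_bigr => i _; rewrite mxE.
by rewrite -expr2 mulrC; apply: CS2.
Qed.

Lemma opnorm_bound p q (B : 'M[R]_(p, q)) (u : 'rV[R]_p) :
  enorm (u *m B) <= opnorm B * enorm u.
Proof.
set Fr := \sum_(j < q) dot (\row_i B i j) (\row_i B i j).
have Fr0 : 0 <= Fr by apply: sumr_ge0 => j _; apply: dot_ge0.
have hs : has_sup [set enorm (u *m B) | u in [set u : 'rV[R]_p | enorm u <= 1]].
  split; first by exists (enorm ((0 : 'rV[R]_p) *m B)); exists 0 => //=; rewrite enorm0 ler01.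
  exists (1 + Fr) => _ [v /= v1 <-].
  have h1 := frob_bound B v.
  have h2 : dot v v <= 1.
    rewrite -enorm_sq expr2; have e0 := enorm_ge0 v; move: v1 => /= v1; apply: le_trans (ler_wpM2l e0 v1) _; rewrite mulr1.
    done.
  have h3 := enorm_ge0 (v *m B).
  rewrite -enorm_sq -/Fr in h1.
  have h4 : enorm (v *m B) ^+ 2 <= Fr by apply: le_trans h1 _; rewrite -{2}(mulr1 Fr); apply: ler_wpM2l.
  rewrite expr2 in h4; nra.
have ub := sup_upper_bound hs.
have [u0|upos] := eqVneq (enorm u) 0.
  by rewrite (enorm_eq0 u0) mul0mx enorm0 enorm0 mulr0.
have tpos : 0 < enorm u by rewrite lt_neqAle eq_sym upos enorm_ge0.
have : enorm (((enorm u)^-1 *: u) *m B) <= opnorm B.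
  apply: ub; exists ((enorm u)^-1 *: u) => //=.
  by rewrite enormZ ger0_norm ?invr_ge0 ?enorm_ge0 // mulVf.
rewrite -scalemxAl enormZ ger0_norm ?invr_ge0 ?enorm_ge0 //.
by rewrite mulrC -ler_pdivlMr ?invr_gt0 // invrK mulrC.
Qed.



End Op.


Section Step.
Variables (R : realType) (m n : nat) (J : 'M[R]_(m, n)) (mu : R).
Hypothesis mu0 : 0 < mu.

Let M := J *m J^T + mu%:M.

Lemma dotM (v : 'rV[R]_m) : dot (v *m M) v = dot (v *m J) (v *m J) + mu * dot v v.
Proof.
rewrite /M mulmxDr dotDl mulmxA dot_mx trmxK; congr (_ + _).
by rewrite mul_mx_scalar dotZl.
Qed.

Lemma M_unit : M \in unitmx.
Proof.
rewrite unitmxE unitfE; apply/negP => /det0P [v vn0 vM].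
have : dot (v *m M) v = 0 by rewrite vM dot0l.
rewrite dotM => H.
have h1 := dot_ge0 (v *m J); have h2 := dot_ge0 v.
have : mu * dot v v = 0 by have := mulr_ge0 (ltW mu0) h2; lra.
move/eqP; rewrite mulf_eq0 (gt_eqF mu0) /= => /eqP.
by move/dot_eq0 => v0; rewrite v0 eqxx in vn0.
Qed.

Variables (hx : 'rV[R]_n).
Let g := hx *m J^T.
Let d := - g *m invmx M.

Lemma dM : d *m M = - g.
Proof. by rewrite /d mulmxKV // M_unit. Qed.

Lemma dot_dg : dot d g = - (dot (d *m J) (d *m J) + mu * dot d d).
Proof. by rewrite -dotM dotC dM dotNl opprK. Qed.

Lemma pred_eq : 2^-1 * enorm ((0 : 'rV[R]_m) *m J + hx) ^+ 2 - 2^-1 * enorm (d *m J + hx) ^+ 2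
   = 2^-1 * dot (d *m J) (d *m J) + mu * dot d d.
Proof.
rewrite mul0mx add0r !enorm_sq dotDl !dotDr (dotC hx (d *m J)) (dot_mx d J hx) -/g dot_dg.
lra.
Qed.

Lemma q_le : dot (d *m J + hx) (d *m J + hx) <= dot hx hx.
Proof.
have := pred_eq; rewrite mul0mx add0r !enorm_sq => H.
have h1 := dot_ge0 (d *m J); have h2 := mulr_ge0 (ltW mu0) (dot_ge0 d).
lra.
Qed.

Lemma g_bound (K : R) : 0 <= K -> (forall w, enorm (w *m J^T) <= K * enorm w) ->
  dot g g <= (4 * K ^+ 2 + 2 * mu) * (2^-1 * dot (d *m J) (d *m J) + mu * dot d d).
Proof.
move=> K0 HK.
have -> : g = - ((d *m J) *m J^T + mu *: d).
  by rewrite -mulmxA -mul_mx_scalar -mulmxDr -/M dM opprK.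
rewrite dotNl dotNr opprK.
have h1 := dot_sq_le ((d *m J) *m J^T) (mu *: d).
have h2 : dot (d *m J *m J^T) (d *m J *m J^T) <= K ^+ 2 * dot (d *m J) (d *m J).
  rewrite -!enorm_sq -exprMn ler_pXn2r ?nnegrE ?enorm_ge0 ?mulr_ge0 ?enorm_ge0 //.
rewrite dotZl dotZr in h1.
have p1 := mulr_ge0 (sqr_ge0 K) (mulr_ge0 (ltW mu0) (dot_ge0 d)).
have p2 := mulr_ge0 (ltW mu0) (dot_ge0 (d *m J)).
lra.
Qed.

Lemma d_neq0 : g != 0 -> d != 0.
Proof.
move=> gn0; apply/negP => /eqP d0; have := dM; rewrite d0 mul0mx => /eqP.
by rewrite eq_sym oppr_eq0 (negbTE gn0).
Qed.

End Step.


Section Taylor.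
Variables (R : realType) (m n : nat) (h : 'rV[R]_m -> 'rV[R]_n) (L : R).
Hypothesis hd : forall y, differentiable h y.
Hypothesis L0 : 0 <= L.
Hypothesis Lip : forall y z, opnorm ('J h y - 'J h z) <= L * enorm (y - z).

Lemma dot_cont (w : 'rV[R]_n) : continuous (fun v : 'rV[R]_n => dot v w).
Proof.
move=> v; apply: differentiable_continuous.
have -> : (fun v => dot v w) = \sum_(i < n) (fun v : 'rV[R]_n => v ord0 i * w ord0 i).
  by rewrite fct_sumE; apply/funext => u.
apply: differentiable_sum => i.
apply: (@differentiableM _ _ (fun v : 'rV[R]_n => v ord0 i) (cst (w ord0 i))).
  exact: differentiable_coord.
exact: differentiable_cst.
Qed.

Lemma dot_lin (w : 'rV[R]_n) : linear (fun v : 'rV[R]_n => dot v w : R).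
Proof. by move=> a u v; rewrite dotDl dotZl. Qed.


Lemma derive_dot (w d y : 'rV[R]_m) : True.
Proof. by []. Qed.

Lemma is_derive_line (w : 'rV[R]_n) (x d : 'rV[R]_m) (t : R) :
  is_derive t 1 (fun s : R => dot (h (s *: d + x)) w) (dot (d *m 'J h (t *: d + x)) w).
Proof.
pose lM := GRing.isLinear.Build _ _ _ _ _ (dot_lin w).
pose l : {linear 'rV[R]_n -> R} := HB.pack (fun v : 'rV[R]_n => dot v w) lM.
pose F := l \o h.
set y := t *: d + x.
have dF : differentiable F y.
  apply: differentiable_comp; first exact: hd.
  exact/linear_differentiable/dot_cont.
have DF : 'D_d F y = dot (d *m 'J h y) w.
  rewrite deriveE // diff_comp //; last exact/linear_differentiable/dot_cont.
  rewrite diff_lin /=; last exact: dot_cont.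
  by rewrite -deriveE // deriveEjacobian.
have E : (fun s : R => s^-1 *: (((fun s : R => dot (h (s *: d + x)) w) \o shift t) (s *: 1)
            - (fun s : R => dot (h (s *: d + x)) w) t))
       = (fun s : R => s^-1 *: ((F \o shift y) (s *: d) - F y)).
  apply/funext => s /=; congr (_ *: (_ - _)).
  by rewrite /F /= /y [s%:A]mulr1 scalerDl addrA.
have dv : derivable F y d by apply: diff_derivable.
split; first by rewrite /derivable E.
by rewrite /derive E -DF.
Qed.


Lemma aux_eq (a b c e f : R) : f = a - b - c -> a - b = e -> f = e - c.
Proof. by move=> -> ->. Qed.

Lemma taylor (x d : 'rV[R]_m) : enorm (h (x + d) - h x - d *m 'J h x) <= L * dot d d.
Proof.
set w := h (x + d) - h x - d *m 'J h x.
pose phi := fun s : R => dot (h (s *: d + x)) w.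
pose df := fun s : R => dot (d *m 'J h (s *: d + x)) w.
have hder : forall s : R, is_derive s (1 : R) phi (df s) := is_derive_line w x d.
have hc : {within `[0, 1], continuous phi}.
  apply: derivable_within_continuous => s _; exact: (@ex_derive _ _ _ _ _ _ _ (hder s)).
have [c cin Hc] := MVT ltr01 (fun s _ => hder s) hc.
have Hc' : dot (h (x + d)) w - dot (h x) w = dot (d *m 'J h (c *: d + x)) w.
  rewrite (addrC x d); move: Hc; rewrite /phi /df scale1r scale0r add0r subr0 mulr1.
  exact: id.
clear Hc.
have e1 : dot w w = dot (h (x + d)) w - dot (h x) w - dot (d *m 'J h x) w.
  by rewrite {1}/w !dotDl !dotNl.
have e2 : dot (d *m ('J h (c *: d + x) - 'J h x)) w
    = dot (d *m 'J h (c *: d + x)) w - dot (d *m 'J h x) w.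
  by rewrite mulmxDr mulmxN (dotDl (d *m 'J h (c *: d + x))) dotNl.
clearbody w.
have key : dot w w = dot (d *m ('J h (c *: d + x) - 'J h x)) w.
  by rewrite e2; exact: (aux_eq e1 Hc').
have c01 : 0 <= c <= 1 by move: cin; rewrite in_itv /= => /andP [/ltW -> /ltW ->].
have b1 := CS (d *m ('J h (c *: d + x) - 'J h x)) w.
have b2 := opnorm_bound ('J h (c *: d + x) - 'J h x) d.
have b3 := Lip (c *: d + x) x.
rewrite addrK enormZ ger0_norm ?(andP c01).1 // in b3.
have en0 := enorm_ge0 d; have ew0 := enorm_ge0 w.
have b4 : opnorm ('J h (c *: d + x) - 'J h x) <= L * enorm d.
  apply: le_trans b3 _; rewrite ler_wpM2l // -[X in _ <= X]mul1r ler_wpM2r //.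
  by case/andP: c01.
have b5 : enorm (d *m ('J h (c *: d + x) - 'J h x)) <= L * enorm d * enorm d.
  by apply: le_trans b2 _; rewrite ler_wpM2r.
have b6 : enorm w ^+ 2 <= L * dot d d * enorm w.
  rewrite enorm_sq key -enorm_sq; apply: le_trans b1 _; rewrite ler_wpM2r //.
  by rewrite expr2 mulrA.
have Ld : 0 <= L * dot d d by rewrite mulr_ge0 // dot_ge0.
have [w0|wpos] := eqVneq (enorm w) 0; first by rewrite w0.
have wp : 0 < enorm w by rewrite lt_neqAle eq_sym wpos ew0.
by rewrite expr2 ler_pM2r // in b6.
Qed.

End Taylor.


Section Key.
Variables (R : realType) (m n : nat) (h : 'rV[R]_m -> 'rV[R]_n) (L : R).
Hypothesis hd : forall y, differentiable h y.
Hypothesis L0 : 0 <= L.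
Hypothesis Lip : forall y z, opnorm ('J h y - 'J h z) <= L * enorm (y - z).

Lemma pred_lm (x : 'rV[R]_m) mu : 0 < mu ->
  qmod h x 0 - qmod h x (lm_dir h x mu) =
  2^-1 * dot (lm_dir h x mu *m 'J h x) (lm_dir h x mu *m 'J h x) + mu * dot (lm_dir h x mu) (lm_dir h x mu).
Proof. move=> mu0; exact: (pred_eq ('J h x) mu0 (h x)). Qed.

Lemma qmod0 (x : 'rV[R]_m) : qmod h x 0 = psi h x.
Proof. by rewrite /qmod /psi mul0mx add0r. Qed.

Lemma qmod_ge0 (x d : 'rV[R]_m) : 0 <= qmod h x d.
Proof. by rewrite /qmod mulr_ge0 ?invr_ge0 ?ler0n // sqr_ge0. Qed.

Lemma psi_ge0 (x : 'rV[R]_m) : 0 <= psi h x.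
Proof. by rewrite /psi mulr_ge0 ?invr_ge0 ?ler0n // sqr_ge0. Qed.

Lemma key_ratio (x : 'rV[R]_m) (Dk psi0 ups2 mu : R) :
  psi h x <= psi0 -> psi h x <= Dk -> gradpsi h x != 0 -> 0 < ups2 < 1 ->
  1 <= mu -> ((1 + 2 * psi0) * L + L ^+ 2 * psi0) <= (1 - ups2) * mu ->
  ups2 <= Defs.ratio h x Dk (lm_dir h x mu).
Proof.
move=> hp0 hpD gn0 /andP [u0 u1] mu1 muc.
have mu0 : 0 < mu by apply: lt_le_trans mu1; exact: ltr01.
set d := lm_dir h x mu.
have HP := pred_lm x mu0; rewrite -/d in HP.
set A := dot (d *m 'J h x) (d *m 'J h x) in HP.
set s := dot d d in HP.
set P := qmod h x 0 - qmod h x d in HP.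
have A0 : 0 <= A by apply: dot_ge0.
have dn0 : d != 0 by apply: (d_neq0 mu0 (hx := h x)).
have s0 : 0 < s.
  rewrite lt_neqAle dot_ge0 andbT eq_sym; apply/negP => /eqP /dot_eq0 d0.
  by rewrite d0 eqxx in dn0.
have qd0 := qmod_ge0 x d.
have Pq : P <= psi0 by rewrite /P qmod0; lra.
have muP : mu * s <= P by lra.
have sP : s <= psi0.
  have : 1 * s <= mu * s by rewrite ler_wpM2r // ltW.
  lra.
have psi00 : 0 <= psi0 by apply: le_trans hp0; exact: psi_ge0.
have Ht := taylor hd L0 Lip x d.
set r := h (x + d) - h x - d *m 'J h x in Ht.
set a := d *m 'J h x + h x.
have har : h (x + d) = a + r by rewrite /r /a [RHS]addrC addrA !subrK.
have qa : qmod h x d = 2^-1 * dot a a by rewrite /qmod enorm_sq.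
have ha : dot a a <= dot (h x) (h x) by apply: (q_le ('J h x) mu0 (h x)).
have hpx : psi h x = 2^-1 * dot (h x) (h x) by rewrite /psi enorm_sq.
have ea : enorm a <= 1 + 2 * psi0.
  have := enorm_ge0 a; rewrite -enorm_sq in ha; have := sqr_ge0 (enorm a - 1); rewrite sqrrB1; lra.
clearbody a r.
have er0 := enorm_ge0 r; have ea0 := enorm_ge0 a.
have hpsi : psi h (x + d) = 2^-1 * dot a a + dot a r + 2^-1 * dot r r.
  rewrite /psi har enorm_sq dotDl !dotDr (dotC r a); lra.
have c1 : dot a r <= (1 + 2 * psi0) * (L * s).
  apply: le_trans (CS a r) _; apply: ler_pM => //.
have c2 : dot r r <= L ^+ 2 * psi0 * s.
  rewrite -enorm_sq; apply: le_trans (_ : (L * s) ^+ 2 <= _).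
    by rewrite ler_pXn2r ?nnegrE // mulr_ge0 // ltW.
  have ss : s * s <= psi0 * s by rewrite ler_wpM2r // ltW.
  have e1 : (L * s) ^+ 2 = L ^+ 2 * (s * s) by rewrite exprMn expr2.
  have e2 : L ^+ 2 * psi0 * s = L ^+ 2 * (psi0 * s) by rewrite mulrA.
  by rewrite e1 e2 ler_wpM2l ?sqr_ge0.
set c := (1 + 2 * psi0) * L + L ^+ 2 * psi0 in muc.
have c3 : c * s <= (1 - ups2) * P.
  apply: le_trans (_ : (1 - ups2) * mu * s <= _).
    by rewrite ler_wpM2r // ltW.
  rewrite -mulrA ler_wpM2l //; lra.
have c4 : 0 <= L ^+ 2 * psi0 * s by rewrite !mulr_ge0 // ?sqr_ge0 // ltW.
have num : ups2 * P <= Dk - psi h (x + d).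
  have : P = psi h x - qmod h x d by rewrite /P qmod0.
  rewrite /c in c3; lra.
have P0 : 0 < P by apply: lt_le_trans muP; rewrite mulr_gt0.
by rewrite /Defs.ratio -/d -/P ler_pdivlMr.
Qed.

End Key.


Lemma sq_bound (R : realType) (t p : R) : 0 <= t -> 0 <= p -> 2^-1 * t ^+ 2 <= p -> t <= 1 + 2 * p.
Proof. move=> t0 p0 H; have := sqr_ge0 (t - 1); rewrite sqrrB1 => q; lra. Qed.

Lemma bernoulli (R : realType) (r : R) (p : nat) : 1 <= r -> 1 + p%:R * (r - 1) <= r ^+ p.
Proof.
move=> r1; elim: p => [|p IH]; first by rewrite mul0r addr0 expr0.
rewrite exprS -natr1 mulrDl mul1r.
have h1 : 0 <= p%:R * (r - 1) by rewrite mulr_ge0 // subr_ge0.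
have h2 : r * (1 + p%:R * (r - 1)) <= r * r ^+ p by rewrite ler_wpM2l // (le_trans ler01 r1).
have h3 : 0 <= (r - 1) * (p%:R * (r - 1)) by rewrite mulr_ge0 // subr_ge0.
lra.
Qed.

Section Run.
Variables (R : realType) (m n : nat) (h : 'rV[R]_m -> 'rV[R]_n) (x0 : 'rV[R]_m) (L Mb : R).
Variables (eps eta rho1 rho2 ups1 ups2 mumin xi_min xi_max om_min om_max th_min th_max : R)
  (xi om theta : nat -> R).
Hypothesis hd : forall y, differentiable h y.
Hypothesis L0 : 0 <= L.
Hypothesis Lip : forall y z, opnorm ('J h y - 'J h z) <= L * enorm (y - z).
Hypothesis HMb : forall y, psi h y <= psi h x0 -> enorm y <= Mb.
Hypothesis eps0 : 0 < eps.
Hypothesis eta0 : 0 < eta.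
Hypothesis rho2_01 : 0 < rho2 < 1.
Hypothesis rho1_1 : 1 < rho1.
Hypothesis ups1_0 : 0 < ups1.
Hypothesis ups12 : ups1 < ups2.
Hypothesis ups2_1 : ups2 < 1.
Hypothesis mumin0 : 0 < mumin.
Hypothesis xi_b : 0 <= xi_min <= xi_max.
Hypothesis om_b : 0 <= om_min <= om_max.
Hypothesis xiom : 0 < xi_min + om_min.
Hypothesis th_b : 0 <= th_min <= th_max.
Hypothesis th1 : th_max < 1.
Hypothesis xik : forall k, xi_min <= xi k <= xi_max.
Hypothesis omk : forall k, om_min <= om k <= om_max.
Hypothesis thk : forall k, th_min <= theta k <= th_max.

Variable psi0 : R.
Hypothesis psi0E : psi0 = psi h x0.
Variable H0 : R.
Hypothesis H0E : H0 = 1 + 2 * psi0.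
Variable K0 : R.
Hypothesis K0E : K0 = Num.max 0 (opnorm ('J h 0)) + L * Num.max 0 Mb.
Variable cc : R.
Hypothesis ccE : cc = H0 * L + L ^+ 2 * psi0.
Variable mustar : R.
Hypothesis mustarE : mustar = Num.max 1 (cc / (1 - ups2)).
Variable mulo : R.
Hypothesis muloE : mulo = (xi_min + om_min) * eps `^ eta.
Variable mhi : R.
Hypothesis mhiE : mhi = xi_max * H0 `^ eta + om_max * (K0 * H0) `^ eta.
Variable Lam : R.
Hypothesis LamE : Lam = Num.max 1 (rho1 * mustar / mulo).
Variable mumax : R.
Hypothesis mumaxE : mumax = Num.max mumin (Lam * mhi).
Variable del : R.
Hypothesis delE : del = eps ^+ 2 / (4 * K0 ^+ 2 + 2 * mumax).
Variable c1 : R.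
Hypothesis c1E : c1 = (1 - th_max) * ups1 * del.

Lemma psi00 : 0 <= psi0.
Proof. rewrite psi0E; exact: psi_ge0. Qed.

Lemma K00 : 0 <= K0.
Proof. by rewrite K0E addr_ge0 ?mulr_ge0 // le_max lexx. Qed.

Lemma H00 : 1 <= H0.
Proof. have := psi00; rewrite H0E; lra. Qed.

Lemma mulo0 : 0 < mulo.
Proof. by rewrite muloE mulr_gt0 // powR_gt0. Qed.

Lemma mustar1 : 1 <= mustar.
Proof. by rewrite mustarE le_max lexx. Qed.

Lemma mustar_ok mu : mustar <= mu -> 1 <= mu /\ cc <= (1 - ups2) * mu.
Proof.
rewrite mustarE ge_max => /andP [m1 m2]; split => //.
by rewrite mulrC -ler_pdivrMr ?subr_gt0.
Qed.

Lemma Lam1 : 1 <= Lam.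
Proof. by rewrite LamE le_max lexx. Qed.

Lemma mumax0 : 0 < mumax.
Proof. by apply: lt_le_trans mumin0 _; rewrite mumaxE le_max lexx. Qed.

Lemma del0 : 0 < del.
Proof.
rewrite delE divr_gt0 ?exprn_gt0 //.
have := mumax0; have := sqr_ge0 K0; lra.
Qed.

Lemma c10 : 0 < c1.
Proof. have a : 0 < 1 - th_max by rewrite subr_gt0. by rewrite c1E mulr_gt0 ?del0 // mulr_gt0. Qed.

Section Point.
Variable x : 'rV[R]_m.
Hypothesis hx : psi h x <= psi0.

Lemma J_bound u : enorm (u *m 'J h x) <= K0 * enorm u.
Proof.
have xM : enorm x <= Mb by apply: HMb; rewrite -psi0E.
have e : u *m 'J h x = u *m 'J h 0 + u *m ('J h x - 'J h 0).
  by rewrite mulmxBr addrC subrK.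
rewrite e; apply: le_trans (enormD _ _) _.
have b1 := opnorm_bound ('J h 0) u.
have b2 := opnorm_bound ('J h x - 'J h 0) u.
have b3 := Lip x 0; rewrite subr0 in b3.
have eu := enorm_ge0 u.
rewrite K0E mulrDl; apply: lerD.
  apply: le_trans b1 _; rewrite ler_wpM2r // le_max lexx orbT //.
apply: le_trans b2 _; rewrite ler_wpM2r //; apply: le_trans b3 _.
rewrite ler_wpM2l // le_max xM orbT //.
Qed.

Lemma JT_bound v : enorm (v *m ('J h x)^T) <= K0 * enorm v.
Proof.
set w := v *m ('J h x)^T.
have e : enorm w ^+ 2 = dot (w *m 'J h x) v.
  by rewrite enorm_sq (dot_mx w ('J h x) v).
have b1 := CS (w *m 'J h x) v.
have b2 := J_bound w.
have ew := enorm_ge0 w; have ev := enorm_ge0 v.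
have b3 : enorm w ^+ 2 <= K0 * enorm w * enorm v.
  by rewrite e; apply: le_trans b1 _; rewrite ler_wpM2r.
have [w0|wpos] := eqVneq (enorm w) 0; first by rewrite w0 mulr_ge0 // K00.
have wp : 0 < enorm w by rewrite lt_neqAle eq_sym wpos ew.
have b4 : enorm w * enorm w <= (K0 * enorm v) * enorm w.
  have -> : K0 * enorm v * enorm w = K0 * enorm w * enorm v by ring.
  by rewrite -expr2.
by rewrite ler_pM2r in b4.
Qed.

Lemma h_bound : enorm (h x) <= H0.
Proof.
have e : psi h x = 2^-1 * enorm (h x) ^+ 2 by [].
have := enorm_ge0 (h x); have := sqr_ge0 (enorm (h x) - 1); rewrite sqrrB1.
by move=> _ _; rewrite H0E; apply: sq_bound; rewrite ?enorm_ge0 ?psi00 // -e.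
Qed.

Lemma g_le : enorm (gradpsi h x) <= K0 * H0.
Proof.
apply: le_trans (JT_bound (h x)) _; rewrite ler_wpM2l ?K00 //; exact: h_bound.
Qed.

Hypothesis nst : ~ stops h eps x.

Lemma nst_h : eps < enorm (h x).
Proof. by rewrite ltNge; apply/negP => H; apply: nst; left. Qed.

Lemma nst_g : eps < enorm (gradpsi h x).
Proof. by rewrite ltNge; apply/negP => H; apply: nst; right. Qed.

Lemma g_neq0 : gradpsi h x != 0.
Proof.
apply/negP => /eqP g0; have H := nst_g; rewrite g0 enorm0 in H.
by have := lt_trans eps0 H; rewrite ltxx.
Qed.

Lemma mu_lo k : mulo <= mu_val h (xi k) (om k) eta x.
Proof.
rewrite /mu_val muloE mulrDl.
have p1 : eps `^ eta <= enorm (h x) `^ eta.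
  by apply: ge0_ler_powR; rewrite ?nnegrE ?enorm_ge0 ?(ltW eta0) ?(ltW eps0) ?(ltW nst_h).
have p2 : eps `^ eta <= enorm (gradpsi h x) `^ eta.
  by apply: ge0_ler_powR; rewrite ?nnegrE ?enorm_ge0 ?(ltW eta0) ?(ltW eps0) ?(ltW nst_g).
have q0 := powR_ge0 eps eta.
case/andP: (xik k) => a1 a2; case/andP: (omk k) => b1 b2.
case/andP: xi_b => c1' c2; case/andP: om_b => d1 d2.
apply: lerD.
  apply: le_trans (_ : xi k * eps `^ eta <= _); first by rewrite ler_wpM2r.
  by rewrite ler_wpM2l //; lra.
apply: le_trans (_ : om k * eps `^ eta <= _); first by rewrite ler_wpM2r.
by rewrite ler_wpM2l //; lra.
Qed.

Lemma mu_hi k : mu_val h (xi k) (om k) eta x <= mhi.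
Proof.
rewrite /mu_val mhiE.
have p1 : enorm (h x) `^ eta <= H0 `^ eta.
  have h1 := H00; apply: ge0_ler_powR; rewrite ?nnegrE ?enorm_ge0 ?(ltW eta0) ?h_bound //.
  by apply: le_trans h1; exact: ler01.
have p2 : enorm (gradpsi h x) `^ eta <= (K0 * H0) `^ eta.
  have h1 := H00; apply: ge0_ler_powR; rewrite ?nnegrE ?enorm_ge0 ?(ltW eta0) ?g_le //.
  by rewrite mulr_ge0 ?K00 //; apply: le_trans h1; exact: ler01.
have q1 := powR_ge0 (enorm (h x)) eta; have q2 := powR_ge0 (enorm (gradpsi h x)) eta.
case/andP: (xik k) => a1 a2; case/andP: (omk k) => b1 b2.
case/andP: xi_b => c1' c2; case/andP: om_b => d1 d2.
apply: lerD.
  apply: le_trans (_ : xi_max * enorm (h x) `^ eta <= _); first by rewrite ler_wpM2r.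
  by rewrite ler_wpM2l //; lra.
apply: le_trans (_ : om_max * enorm (gradpsi h x) `^ eta <= _); first by rewrite ler_wpM2r.
by rewrite ler_wpM2l //; lra.
Qed.

End Point.


Definition trialf (k : nat) (x : 'rV[R]_m) (D : R) (t : R) :=
  Defs.ratio h x D (lm_dir h x (muhat mumin t (mu_val h (xi k) (om k) eta x))).

Definition Inv (k : nat) (x : 'rV[R]_m) (lam D : R) :=
  [/\ 0 < lam, lam <= Lam, psi h x <= D & D <= psi0 - k%:R * c1].

Lemma Inv_psi k x lam D : Inv k x lam D -> psi h x <= psi0.
Proof.
case=> _ _ h1 h2; have h3 : 0 <= k%:R * c1 by rewrite mulr_ge0 // ltW // c10.
lra.
Qed.

Lemma big_trial k x lam D t : Inv k x lam D -> ~ stops h eps x -> 0 < t ->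
  mustar <= t * mu_val h (xi k) (om k) eta x -> ups2 <= trialf k x D t.
Proof.
move=> I nst t0 H.
have hx := Inv_psi I.
case: I => _ _ hD _.
set mu := mu_val h (xi k) (om k) eta x in H *.
have mh : mustar <= muhat mumin t mu by apply: le_trans H _; rewrite /muhat le_max lexx orbT.
have [m1 m2] := mustar_ok mh.
rewrite ccE H0E in m2.
rewrite /trialf -/mu.
have gn : gradpsi h x != 0 by apply: g_neq0.
apply: (key_ratio hd L0 Lip hx hD gn) => //.
by rewrite (lt_trans ups1_0 ups12) ups2_1.
Qed.

Lemma step_inv k x lam D p :
  Inv k x lam D -> ~ stops h eps x ->
  (forall j, (j < p)%N -> trialf k x D (rho1 ^+ j * lam) < ups1) ->
  ups1 <= trialf k x D (rho1 ^+ p * lam) ->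
  let mu := mu_val h (xi k) (om k) eta x in
  let x' := x + lm_dir h x (muhat mumin (rho1 ^+ p * lam) mu) in
  Inv k.+1 x'
     (if ups2 <= trialf k x D (rho1 ^+ p * lam) then rho2 * rho1 ^+ p * lam else rho1 ^+ p * lam)
     ((1 - theta k) * psi h x' + theta k * D).
Proof.
move=> I nst hj hp mu x'.
have hx := Inv_psi I.
have I' := I; case: I' => lam0 lamL hD Dk.
have mulo_mu : mulo <= mu by apply: mu_lo.
have mu_hi' : mu <= mhi by apply: mu_hi.
have mulo0' := mulo0.
have mu0 : 0 < mu by apply: lt_le_trans mulo_mu.
have rho10 : 0 < rho1 by apply: lt_trans rho1_1; exact: ltr01.
set la := rho1 ^+ p * lam.
have la0 : 0 < la by rewrite /la mulr_gt0 // exprn_gt0.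
have laL : la <= Lam.
  case: (posnP p) => [p0|ppos]; first by rewrite /la p0 expr0 mul1r.
  have ep : p = p.-1.+1 by rewrite prednK.
  set p' := p.-1 in ep.
  have hlt : trialf k x D (rho1 ^+ p' * lam) < ups1 by apply: hj; rewrite ep ltnSn.
  rewrite /la ep.
  have hm : rho1 ^+ p' * lam * mu < mustar.
    rewrite ltNge; apply/negP => H.
    have := big_trial I nst (mulr_gt0 (exprn_gt0 p' rho10) lam0) H.
    move=> H2; have := lt_le_trans ups12 H2; have := hlt; move=> a b.
    by have := lt_trans a b; rewrite ltxx.
  rewrite LamE le_max; apply/orP; right.
  rewrite ler_pdivlMr // exprS -mulrA.
  have : rho1 * (rho1 ^+ p' * lam) * mulo <= rho1 * (rho1 ^+ p' * lam) * mu.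
    by rewrite ler_wpM2l // ltW // mulr_gt0 // mulr_gt0 // exprn_gt0.
  have : rho1 * (rho1 ^+ p' * lam * mu) <= rho1 * mustar by rewrite ler_wpM2l // ltW.
  by rewrite !mulrA => a b; apply: le_trans b _; rewrite -!mulrA; rewrite -!mulrA in a.
set mh := muhat mumin la mu.
have mh_min : mumin <= mh by rewrite /mh /muhat le_max lexx.
have mh0 : 0 < mh by apply: lt_le_trans mh_min.
have lamu : la * mu <= Lam * mhi by apply: ler_pM => //; apply: ltW.
have mh_max : mh <= mumax.
  rewrite /mh /muhat mumaxE ge_max; apply/andP; split; rewrite le_max ?lexx //.
  by rewrite lamu orbT.
set d := lm_dir h x mh.
have HP : qmod h x 0 - qmod h x d = 2^-1 * dot (d *m 'J h x) (d *m 'J h x) + mh * dot d d.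
  by apply: pred_lm.
have JT : forall v, enorm (v *m ('J h x)^T) <= K0 * enorm v by move=> v; apply: JT_bound.
have GB : dot (gradpsi h x) (gradpsi h x) <=
    (4 * K0 ^+ 2 + 2 * mh) * (2^-1 * dot (d *m 'J h x) (d *m 'J h x) + mh * dot d d).
  exact: (g_bound mh0 (h x) K00 JT).
have eg : eps ^+ 2 <= dot (gradpsi h x) (gradpsi h x).
  rewrite -enorm_sq ler_pXn2r ?nnegrE ?enorm_ge0 ?(ltW eps0) //.
  by apply: ltW; apply: nst_g.
set P := qmod h x 0 - qmod h x d in HP.
have A0 := dot_ge0 (d *m 'J h x); have s0 := dot_ge0 d.
have P0 : 0 <= P.
  by rewrite HP addr_ge0 // mulr_ge0 // ?invr_ge0 ?ler0n // ltW.
have Pdel : del <= P.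
  rewrite delE ler_pdivrMr; last first.
    by have := mumax0; have := sqr_ge0 K0; move=> a b; lra.
  apply: le_trans eg _; rewrite -HP in GB; apply: le_trans GB _.
  rewrite mulrC ler_wpM2l //; have := mh_max; move=> a; lra.
have Ppos : 0 < P by apply: lt_le_trans Pdel; exact: del0.
have hp' : ups1 * P <= D - psi h (x + d).
  by move: hp; rewrite /trialf -/mu -/la -/mh -/d /Defs.ratio -/P ler_pdivlMr.
have hpsi' : psi h x' <= D - ups1 * del.
  have : ups1 * del <= ups1 * P by rewrite ler_wpM2l // ltW.
  rewrite /x' -/la -/mh -/d; move=> a; lra.
case/andP: (thk k) => tk1 tk2.
have tk0 : 0 <= theta k by apply: le_trans tk1; case/andP: th_b.
have th1' := th1.
have c1le : c1 <= (1 - theta k) * (ups1 * del).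
  rewrite c1E -mulrA ler_wpM2r //; first by rewrite mulr_ge0 // ltW // del0.
  lra.
have hpsi0 : 0 <= psi h x' by apply: psi_ge0.
have ud : 0 <= ups1 * del by rewrite mulr_ge0 // ltW // del0.
split.
- case: ifP => _; last by [].
  by rewrite -mulrA mulr_gt0 //; case/andP: rho2_01.
- case: ifP => _; last by [].
  rewrite -mulrA -/la; apply: le_trans laL; rewrite -{2}(mul1r la) ler_wpM2r //; first exact: ltW.
  by case/andP: rho2_01 => _ /ltW.
- have : 0 <= theta k * (D - psi h x') by rewrite mulr_ge0 //; lra.
  move=> a; lra.
- have e1 : (k.+1)%:R * c1 = k%:R * c1 + c1 by rewrite -natr1 mulrDl mul1r.
  rewrite e1.
  have : (1 - theta k) * psi h x' <= (1 - theta k) * (D - ups1 * del).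
    by rewrite ler_wpM2l // subr_ge0; lra.
  move=> a; lra.
Qed.


Lemma exists_p k x lam D : Inv k x lam D -> ~ stops h eps x ->
  exists p, ups1 <= trialf k x D (rho1 ^+ p * lam).
Proof.
move=> I nst; have hx := Inv_psi I.
have I' := I; case: I' => lam0 _ _ _.
set mu := mu_val h (xi k) (om k) eta x.
have mulo_mu : mulo <= mu by apply: mu_lo.
have mulo0' := mulo0.
have r1 : 0 < rho1 - 1 by rewrite subr_gt0.
have q0 : 0 < lam * mulo * (rho1 - 1) by rewrite !mulr_gt0.
have B0 : 0 <= mustar / (lam * mulo * (rho1 - 1)).
  by apply: divr_ge0; [exact: (le_trans ler01 mustar1) | exact: ltW].
have [p Hp] : exists p : nat, mustar / (lam * mulo * (rho1 - 1)) < p%:R.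
  by exists (Num.Def.archi_bound (mustar / (lam * mulo * (rho1 - 1)))); exact: archi_boundP.
exists p.
have hb := bernoulli p (ltW rho1_1).
have rp0 : 0 < rho1 ^+ p by rewrite exprn_gt0 // (lt_trans ltr01 rho1_1).
have H : mustar <= rho1 ^+ p * lam * mu.
  rewrite ltr_pdivrMr // in Hp.
  have e1 : p%:R * (lam * mulo * (rho1 - 1)) = (p%:R * (rho1 - 1)) * lam * mulo.
    by ring.
  rewrite e1 in Hp.
  have a1 : p%:R * (rho1 - 1) * lam * mulo <= rho1 ^+ p * lam * mulo.
    rewrite ler_pM2r // ler_pM2r //; lra.
  have a2 : rho1 ^+ p * lam * mulo <= rho1 ^+ p * lam * mu.
    by rewrite ler_wpM2l // ltW // mulr_gt0.
  lra.
have := big_trial I nst (mulr_gt0 rp0 lam0) H.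
have u := ups12; move=> a; lra.
Qed.

Definition pick_p k x lam D : nat :=
  match pselect (exists p, ups1 <= trialf k x D (rho1 ^+ p * lam)) with
  | left e => ex_minn e
  | right _ => 0%N
  end.

Lemma pick_pP k x lam D : (exists p, ups1 <= trialf k x D (rho1 ^+ p * lam)) ->
  ups1 <= trialf k x D (rho1 ^+ pick_p k x lam D * lam) /\
  forall j, (j < pick_p k x lam D)%N -> trialf k x D (rho1 ^+ j * lam) < ups1.
Proof.
move=> ex; rewrite /pick_p; case: pselect => [e|//].
case: ex_minnP => p Pp Pmin; split => // j jp.
rewrite ltNge; apply/negP => Pj; have := Pmin j Pj.
by rewrite leqNgt jp.
Qed.

Definition next k (st : 'rV[R]_m * R * R) : 'rV[R]_m * R * R :=
  let: (x, lam, D) := st in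
  let p := pick_p k x lam D in
  let mu := mu_val h (xi k) (om k) eta x in
  let x' := x + lm_dir h x (muhat mumin (rho1 ^+ p * lam) mu) in
  (x', if ups2 <= trialf k x D (rho1 ^+ p * lam) then rho2 * rho1 ^+ p * lam else rho1 ^+ p * lam,
   (1 - theta k) * psi h x' + theta k * D).

Fixpoint st k : 'rV[R]_m * R * R :=
  match k with 0%N => (x0, 1, psi h x0) | k'.+1 => next k' (st k') end.

Definition xs k := (st k).1.1.
Definition lams k := (st k).1.2.
Definition Ds k := (st k).2.
Definition ps k := pick_p k (xs k) (lams k) (Ds k).

Lemma stE k : st k = (xs k, lams k, Ds k).
Proof. by rewrite /xs /lams /Ds; case: (st k) => [[]]. Qed.

Lemma stS k : st k.+1 = next k (xs k, lams k, Ds k).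
Proof. by rewrite -stE. Qed.

Lemma Inv0 : Inv 0 x0 1 (psi h x0).
Proof.
split; rewrite ?ltr01 ?Lam1 ?psi0E ?lexx //.
by rewrite mul0r subr0.
Qed.

Lemma st_inv k : (forall j, (j <= k)%N -> ~ stops h eps (xs j)) -> Inv k (xs k) (lams k) (Ds k).
Proof.
elim: k => [|k IH] H; first by rewrite /xs /lams /Ds /=; exact: Inv0.
have Ik : Inv k (xs k) (lams k) (Ds k) by apply: IH => j jk; apply: H; rewrite (leq_trans jk).
have nk : ~ stops h eps (xs k) by apply: H; rewrite leqnSn.
have [P1 P2] := pick_pP (exists_p Ik nk).
have := step_inv Ik nk P2 P1.
by rewrite /xs /lams /Ds stS.
Qed.

Lemma st_run : LMTR_run h x0 eps eta rho1 rho2 ups1 ups2 mumin xi om theta xs lams Ds ps.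
Proof.
split => //.
move=> k H /=.
have Ik := st_inv H.
have nk : ~ stops h eps (xs k) by apply: H.
have [P1 P2] := pick_pP (exists_p Ik nk).
split => //; by rewrite /xs /lams /Ds stS.
Qed.

Lemma run_inv x lam D p : LMTR_run h x0 eps eta rho1 rho2 ups1 ups2 mumin xi om theta x lam D p ->
  forall k, (forall j, (j <= k)%N -> ~ stops h eps (x j)) -> Inv k (x k) (lam k) (D k).
Proof.
case=> ex0 el0 eD0 Hrun; elim => [|k IH] H; first by rewrite ex0 el0 eD0; exact: Inv0.
have Ik : Inv k (x k) (lam k) (D k) by apply: IH => j jk; apply: H; rewrite (leq_trans jk).
have nk : ~ stops h eps (x k) by apply: H; rewrite leqnSn.
have [P1 P2 ex el eD] := Hrun k (fun j jk => H j (leq_trans jk (leqnSn k))).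
have HH := step_inv Ik nk P1 P2.
rewrite eD el ex; exact: HH.
Qed.

Lemma no_infinite x lam D p : LMTR_run h x0 eps eta rho1 rho2 ups1 ups2 mumin xi om theta x lam D p ->
  (forall k, ~ stops h eps (x k)) -> False.
Proof.
move=> Hr Hk.
have c0 := c10.
have hp0 := psi00.
have [k Hkk] : exists k : nat, psi0 / c1 < k%:R.
  by exists (Num.Def.archi_bound (psi0 / c1)); apply: archi_boundP; rewrite divr_ge0 // ltW.
have [_ _ a b] : Inv k (x k) (lam k) (D k) by apply: (run_inv Hr) => j _; exact: Hk.
have := psi_ge0 h (x k).
rewrite ltr_pdivrMr // in Hkk.
move=> z; lra.
Qed.

End Run.

Unset Implicit Arguments. Set Strict Implicit.
Theorem theorem4 (R : realType) (m n : nat) (h : 'rV[R]_m -> 'rV[R]_n)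
  (x0 : 'rV[R]_m) (delta beta rr L : R)
  (eps eta rho1 rho2 ups1 ups2 mumin xi_min xi_max om_min om_max th_min th_max : R)
  (xi om theta : nat -> R) :
  (* h continuously differentiable *)
  (forall y, differentiable h y) -> continuous (fun y => 'J h y) ->
  (* Omega nonempty *)
  (exists y, h y = 0) ->
  (* (A1) *)
  (exists xs, h xs = 0 /\ 0 < delta <= 1 /\ 0 < beta /\ 0 < rr < 1 /\
     forall y, enorm (y - xs) <= rr ->
       beta * dist_set y [set z | h z = 0] <= enorm (h y) `^ delta) ->
  (* (A2) *)
  (exists M : R, forall y, psi h y <= psi h x0 -> enorm y <= M) ->
  (* (A3) *)
  (forall y z, opnorm ('J h y - 'J h z) <= L * enorm (y - z)) ->
  (* parameters *)
  0 < eps -> 0 < eta < 4 * delta ->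
  0 < rho2 < 1 -> 1 < rho1 ->
  0 < ups1 -> ups1 < ups2 -> ups2 < 1 ->
  0 < mumin ->
  0 <= xi_min <= xi_max -> 0 <= om_min <= om_max -> 0 < xi_min + om_min ->
  0 <= th_min <= th_max -> th_max < 1 ->
  (forall k, xi_min <= xi k <= xi_max) ->
  (forall k, om_min <= om k <= om_max) ->
  (forall k, th_min <= theta k <= th_max) ->
  (exists x lam D p,
     LMTR_run h x0 eps eta rho1 rho2 ups1 ups2 mumin xi om theta x lam D p) /\
  (forall x lam D p,
     LMTR_run h x0 eps eta rho1 rho2 ups1 ups2 mumin xi om theta x lam D p ->
     (exists k, stops h eps (x k) /\ forall j, (j < k)%N -> ~ stops h eps (x j))
     \/
     [/\ forall k, ~ stops h eps (x k),
         cvg (D @ \oo) /\ cvg ((fun k => psi h (x k)) @ \oo),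
         lim (D @ \oo) = lim ((fun k => psi h (x k)) @ \oo),
         (fun k => enorm (gradpsi h (x k))) @ \oo --> 0 &
         forall xb, acc_point x xb -> gradpsi h xb = 0]).
Proof.
move=> hd _ _ _ [Mb HMb] Lip eps0 /andP [eta0 _] rho2_01 rho1_1 ups1_0 ups12 ups2_1 mumin0
  xi_b om_b xiom th_b th1 xik omk thk.
pose L' := Num.max L 0.
have L0 : 0 <= L' by rewrite /L' le_max lexx orbT.
have Lip' : forall y z, opnorm ('J h y - 'J h z) <= L' * enorm (y - z).
  move=> y z; apply: le_trans (Lip y z) _; apply: ler_wpM2r; first exact: enorm_ge0.
  by rewrite /L' le_max lexx.
split.
  do 4 eexists.
  exact: (st_run hd L0 Lip' HMb eps0 eta0 rho2_01 rho1_1 ups1_0 ups12 ups2_1 mumin0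
    xi_b om_b xiom th_b th1 xik omk thk erefl erefl erefl erefl erefl erefl erefl erefl
    erefl erefl erefl).
move=> x lam D p Hr.
case: (pselect (exists k, stops h eps (x k))) => [ex|nex].
  left.
  pose P := fun k => `[< stops h eps (x k) >].
  have exP : exists k, P k by case: ex => k hk; exists k; apply/asboolP.
  case: (ex_minnP exP) => k Pk Pmin.
  exists k; split; first exact/asboolP.
  move=> j jk sj; have := Pmin j (asboolT sj).
  by rewrite leqNgt jk.
right; exfalso.
apply: (no_infinite hd L0 Lip' HMb eps0 eta0 rho2_01 rho1_1 ups1_0 ups12 ups2_1 mumin0
    xi_b om_b xiom th_b th1 xik omk thk erefl erefl erefl erefl erefl erefl erefl erefl
    erefl erefl erefl Hr).
by move=> k sk; apply: nex; exists k.
Qed.
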